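(* Let $\alpha\in(0,1)$ and $A\in\Omega^1_{\mathrm{gr}\alpha}$. Then $A$ is a continuous function on $\mathcal X$, and $$\lim_{\varepsilon\to0}\sup_{|\ell|<\varepsilon}|\ell|^{-\alpha}|A(\ell)|=0.$$
   Context: $E$ is a Banach space; $\mathbf T^2=[-\frac12,\frac12)^2$ with geodesic distance; $\mathcal X=\mathbf T^2\times\{v\in\mathbb R^2:|v|\le\frac14\}$ with $\ell=(x,v)$, $\ell_i=x$, $\ell_f=x+v$, $|\ell|=|v|$, metrised by $d(\ell,\bar\ell)=|\ell_i-\bar\ell_i|\vee|\ell_f-\bar\ell_f|$. $\Omega$ is the space of measurable $A:\mathcal X\to E$ additive under concatenation of joinable collinear segments; $|A|_{\mathrm{gr}\alpha}=\sup_{|\ell|>0}|A(\ell)|/|\ell|^\alpha$ and $\Omega_{\mathrm{gr}\alpha}=\{A:|A|_{\mathrm{gr}\alpha}<\infty\}$. For a continuous $E$-valued 1-form $A=A_1dx_1+A_2dx_2$, $\iota A(x,v)=\int_0^1\sum_iA_i(x+tv)v_i\,dt$. $\Omega^1_{\mathrm{gr}\alpha}$ is the closure of $\iota(\text{smooth }E\text{-valued 1-forms})$ in $\Omega_{\mathrm{gr}\alpha}$. *)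

(* Defs.v *)
From HB Require Import structures.
From mathcomp Require Import all_boot all_order all_algebra.
From mathcomp Require Import all_classical all_reals all_analysis.
Set Implicit Arguments. Unset Strict Implicit. Unset Printing Implicit Defensive.
Import Order.TTheory GRing.Theory Num.Theory.
Import numFieldNormedType.Exports.
Local Open Scope classical_set_scope.
Local Open Scope ring_scope.

Section Defs.
Variable R : realType.

(* points of R^2 represented as pairs; a segment l = (x, v) : (R*R)*(R*R) *)
Definition pt := (R * R)%type.
Definition seg := (pt * pt)%type.

Definition enorm (v : pt) : R := Num.sqrt (v.1 ^+ 2 + v.2 ^+ 2).

Definition zdist (t : R) : R :=
  let f := t - (Num.floor t)%:~R in Num.min f (1 - f).

(* geodesic distance on T^2 = R^2 / Z^2 *)
Definition tdist (x y : pt) : R :=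
  Num.sqrt (zdist (x.1 - y.1) ^+ 2 + zdist (x.2 - y.2) ^+ 2).

Definition tmod (t : R) : R := t - (Num.floor (t + 2^-1))%:~R.
Definition red (x : pt) : pt := (tmod x.1, tmod x.2).

Definition fund (x : pt) : Prop :=
  - 2^-1 <= x.1 < 2^-1 /\ - 2^-1 <= x.2 < 2^-1.

Definition Xset : set seg := [set l | fund l.1 /\ enorm l.2 <= 4^-1].

Definition seg_i (l : seg) : pt := l.1.
Definition seg_f (l : seg) : pt := (l.1.1 + l.2.1, l.1.2 + l.2.2).
Definition seglen (l : seg) : R := enorm l.2.

Definition dX (l m : seg) : R :=
  Num.max (tdist (seg_i l) (seg_i m)) (tdist (seg_f l) (seg_f m)).

Definition openX (U : set seg) : Prop :=
  U `<=` Xset /\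
  forall l, U l -> exists2 e : R, 0 < e & forall m, Xset m -> dX l m < e -> U m.

Definition borelX : set (set seg) := <<s Xset, openX >>.

Definition samedir (v w : pt) : Prop :=
  v.1 * w.2 = v.2 * w.1 /\ 0 <= v.1 * w.1 + v.2 * w.2.

Definition joinable (l m : seg) : Prop :=
  Xset l /\ Xset m /\ m.1 = red (seg_f l) /\ samedir l.2 m.2 /\
  enorm (l.2.1 + m.2.1, l.2.2 + m.2.2) <= 4^-1.

Definition concat (l m : seg) : seg := (l.1, (l.2.1 + m.2.1, l.2.2 + m.2.2)).

Variable E : completeNormedModType R.

Definition in_Omega (A : seg -> E) : Prop :=
  (forall V : set E, open V -> borelX (Xset `&` A @^-1` V)) /\
  (forall l m, joinable l m -> A (concat l m) = A l + A m).

Definition gr_le (alpha : R) (A : seg -> E) (C : R) : Prop :=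
  forall l, Xset l -> 0 < seglen l -> `|A l| <= C * (seglen l) `^ alpha.

Definition in_Omega_gr (alpha : R) (A : seg -> E) : Prop :=
  in_Omega A /\ exists C : R, gr_le alpha A C.

Fixpoint smooth_n (n : nat) (f : pt -> E) : Prop :=
  match n with
  | 0 => continuous f
  | n.+1 => continuous f /\
            forall v : pt, (forall x, derivable f x v) /\ smooth_n n ('D_v f)
  end.

Definition smooth (f : pt -> E) : Prop := forall n, smooth_n n f.

(* functions on the torus T^2: Z^2-periodic functions on R^2 *)
Definition periodic (f : pt -> E) : Prop :=
  forall x : pt, f (x.1 + 1, x.2) = f x /\ f (x.1, x.2 + 1) = f x.

(* smooth E-valued 1-form A1 dx1 + A2 dx2 on T^2 *)
Definition smooth_form (F1 F2 : pt -> E) : Prop :=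
  periodic F1 /\ periodic F2 /\ smooth F1 /\ smooth F2.

(* iota A (x, v) = int_0^1 sum_i A_i (x + t v) v_i dt, the (Riemann) integral
   of a continuous E-valued integrand, as the limit of Riemann sums *)
Definition integrand (F1 F2 : pt -> E) (l : seg) (t : R) : E :=
  let p := (l.1.1 + t * l.2.1, l.1.2 + t * l.2.2) in
  l.2.1 *: F1 p + l.2.2 *: F2 p.

Definition riemann_sum (F1 F2 : pt -> E) (l : seg) (n : nat) : E :=
  (n.+1%:R)^-1 *: \sum_(k < n.+1) integrand F1 F2 l (k%:R / n.+1%:R).

Definition iota (F1 F2 : pt -> E) (l : seg) : E :=
  lim (riemann_sum F1 F2 l @ \oo).

(* Omega^1_{gr alpha}: closure of iota(smooth 1-forms) in Omega_{gr alpha} *)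
Definition in_Omega1_gr (alpha : R) (A : seg -> E) : Prop :=
  in_Omega_gr alpha A /\
  forall eps : R, 0 < eps -> exists F1 F2 : pt -> E, smooth_form F1 F2 /\
    exists2 C : R, C < eps & gr_le alpha (fun l => A l - iota F1 F2 l) C.

Definition continuous_X (A : seg -> E) : Prop :=
  forall l, Xset l -> forall eps : R, 0 < eps ->
    exists2 delta : R, 0 < delta &
      forall m, Xset m -> dX l m < delta -> `|A l - A m| < eps.

Definition sup_small (alpha : R) (A : seg -> E) (eps : R) : R :=
  sup [set r : R | exists l, [/\ Xset l, 0 < seglen l, seglen l < eps &
                                  r = (seglen l) `^ (- alpha) * `|A l|]].

End Defs.

(* Main.v *)
Require Import Defs.
From HB Require Import structures.
From mathcomp Require Import all_boot all_order all_algebra.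
From mathcomp Require Import all_classical all_reals all_analysis.
From mathcomp Require Import zify ring lra.
Import Order.TTheory GRing.Theory Num.Theory.
Import numFieldNormedType.Exports.
Local Open Scope classical_set_scope.
Local Open Scope ring_scope.
Set Implicit Arguments. Unset Strict Implicit.

Section Basic.
Variable R : realType.
Implicit Types (v : pt R) (l m : seg R).

Lemma int_small (z : int) : `|z%:~R : R| < 1 -> z = 0.
Proof.
rewrite -intr_norm => h.
have : `|z| < 1 by rewrite -(ltr_int R).
move=> h2; lia.
Qed.

Lemma enorm_ge1 v : `|v.1| <= enorm v.
Proof.
by rewrite /enorm -sqrtr_sqr ler_wsqrtr // lerDl sqr_ge0.
Qed.

Lemma enorm_ge2 v : `|v.2| <= enorm v.
Proof.
by rewrite /enorm -sqrtr_sqr ler_wsqrtr // lerDr sqr_ge0.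
Qed.

Lemma enorm_ge0 v : 0 <= enorm v.
Proof. exact: sqrtr_ge0. Qed.

Lemma enorm0 v : enorm v = 0 -> v = (0, 0).
Proof.
move=> /eqP; rewrite /enorm sqrtr_eq0 => h.
have h1 := sqr_ge0 v.1; have h2 := sqr_ge0 v.2.
have e1 : v.1 ^+ 2 = 0 by apply/le_anti; rewrite h1 andbT; lra.
have e2 : v.2 ^+ 2 = 0 by apply/le_anti; rewrite h2 andbT; lra.
move/eqP: e1; rewrite sqrf_eq0 => /eqP e1.
move/eqP: e2; rewrite sqrf_eq0 => /eqP e2.
by case: v e1 e2 {h h1 h2} => a b /= -> ->.
Qed.

Lemma Xbound (l : seg R) : Xset l ->
  [/\ -2^-1 <= l.1.1 < 2^-1, -2^-1 <= l.1.2 < 2^-1,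
      `|l.2.1| <= 4^-1 & `|l.2.2| <= 4^-1].
Proof.
case=> [[h1 h2] h3]; split => //.
- exact: le_trans (enorm_ge1 _) h3.
- exact: le_trans (enorm_ge2 _) h3.
Qed.

Lemma zdist_int (t d : R) : zdist t < d -> exists k : int, `|t - k%:~R| < d.
Proof.
rewrite /zdist gt_min => /orP[h|h].
- exists (Num.floor t).
  have := floor_itv t => /andP[a b].
  by rewrite ger0_norm // subr_ge0.
- exists (Num.floor t + 1).
  have := floor_itv t; rewrite intrD => /andP[a b].
  have e1 : (1%:~R : R) = 1 by [].
  rewrite e1 in b *.
  rewrite ler0_norm; last by rewrite subr_le0 ltW.
  lra.
Qed.

Lemma tdist_lt (x y : pt R) (d : R) : tdist x y < d ->
  zdist (x.1 - y.1) < d /\ zdist (x.2 - y.2) < d.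
Proof.
rewrite /tdist => h; split.
- apply: le_lt_trans h; apply: le_trans (ler_norm _) _.
  by rewrite -sqrtr_sqr ler_wsqrtr // lerDl sqr_ge0.
- apply: le_lt_trans h; apply: le_trans (ler_norm _) _.
  by rewrite -sqrtr_sqr ler_wsqrtr // lerDr sqr_ge0.
Qed.


Lemma dX_close (l m : seg R) (d : R) : Xset l -> Xset m -> 0 < d -> d <= 8^-1 ->
  dX l m < d -> exists k1 k2 : int,
  [/\ `|l.1.1 - m.1.1 - k1%:~R| < d, `|l.1.2 - m.1.2 - k2%:~R| < d,
      `|l.2.1 - m.2.1| < 2 * d & `|l.2.2 - m.2.2| < 2 * d].
Proof.
move=> /Xbound [hl1 hl2 hl3 hl4] /Xbound [hm1 hm2 hm3 hm4] d0 d8.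
rewrite /dX gt_max => /andP[hi hf].
have [z1 z2] := tdist_lt hi.
have [z3 z4] := tdist_lt hf.
have [k1 K1] := zdist_int z1.
have [k2 K2] := zdist_int z2.
have [j1 J1] := zdist_int z3.
have [j2 J2] := zdist_int z4.
move: J1 J2; rewrite /seg_i /seg_f /= => J1 J2.
move: K1 K2; rewrite /seg_i /= => K1 K2.
have E1 : j1 = k1.
  apply/eqP; rewrite -subr_eq0; apply/eqP/int_small; rewrite intrB.
  move: hl3 hm3 J1 K1.
  set a := l.2.1; set b := m.2.1; set x := l.1.1; set y := m.1.1.
  set p := j1%:~R; set q := k1%:~R.
  move=> h1 h2 h3 h4.
  move: h1 h2 h3 h4; rewrite !ltr_norml !ler_norml => /andP[? ?] /andP[? ?] /andP[? ?] /andP[? ?].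
  apply/andP; split; lra.
have E2 : j2 = k2.
  apply/eqP; rewrite -subr_eq0; apply/eqP/int_small; rewrite intrB.
  move: hl4 hm4 J2 K2.
  set a := l.2.2; set b := m.2.2; set x := l.1.2; set y := m.1.2.
  set p := j2%:~R; set q := k2%:~R.
  move=> h1 h2 h3 h4.
  move: h1 h2 h3 h4; rewrite !ltr_norml !ler_norml => /andP[? ?] /andP[? ?] /andP[? ?] /andP[? ?].
  apply/andP; split; lra.
subst j1 j2.
exists k1, k2; split => //.
- move: J1 K1; set p := k1%:~R; rewrite !ltr_norml => /andP[? ?] /andP[? ?].
  apply/andP; split; lra.
- move: J2 K2; set p := k2%:~R; rewrite !ltr_norml => /andP[? ?] /andP[? ?].
  apply/andP; split; lra.
Qed.

End Basic.

Section Per.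
Variables (R : realType) (E : completeNormedModType R).

Lemma per_int (f : pt R -> E) : Defs.periodic f ->
  forall (k1 k2 : int) (x : pt R), f (x.1 + k1%:~R, x.2 + k2%:~R) = f x.
Proof.
move=> hp.
have P1 : forall (n : nat) (x : pt R), f (x.1 + n%:R, x.2) = f x.
  elim=> [|n IH] x; first by rewrite addr0; case: x.
  by rewrite -natr1 addrA (hp (x.1 + n%:R, x.2)).1 IH.
have P2 : forall (n : nat) (x : pt R), f (x.1, x.2 + n%:R) = f x.
  elim=> [|n IH] x; first by rewrite addr0; case: x.
  by rewrite -natr1 addrA (hp (x.1, x.2 + n%:R)).2 IH.
have Q1 : forall (k : int) (x : pt R), f (x.1 + k%:~R, x.2) = f x.
  case=> [n|n] x; first exact: P1.
  have := P1 n.+1 (x.1 - n.+1%:R, x.2); rewrite /= subrK.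
  by case: x => a b /= h; rewrite NegzE intrN; exact: (esym h).
have Q2 : forall (k : int) (x : pt R), f (x.1, x.2 + k%:~R) = f x.
  case=> [n|n] x; first exact: P2.
  have := P2 n.+1 (x.1, x.2 - n.+1%:R); rewrite /= subrK.
  by case: x => a b /= h; rewrite NegzE intrN; exact: (esym h).
move=> k1 k2 x.
by rewrite (Q1 k1 (x.1, x.2 + k2%:~R)) Q2.
Qed.

End Per.

Section Unif.
Variables (R : realType) (E : normedModType R).

Lemma natSinv_lt (r : R) : 0 < r -> exists N : nat, forall n, (N <= n)%N -> n.+1%:R^-1 < r.
Proof.
move=> r0; exists (Num.trunc r^-1) => n hn.
rewrite invf_plt ?posrE ?ltr0Sn //.
apply: lt_le_trans (truncnS_gt _) _.
by rewrite ler_nat ltnS.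
Qed.

Lemma ballR (x y r : R) : ball x r y -> `|x - y| < r.
Proof. by rewrite -ball_normE /ball_. Qed.

Lemma ballR' (x y r : R) : `|x - y| < r -> ball x r y.
Proof. by rewrite -ball_normE /ball_. Qed.

Lemma unif_K (f : pt R -> E) : continuous f -> forall e, 0 < e ->
  exists2 d, 0 < d & forall p q : pt R, `|p.1| <= 1 -> `|p.2| <= 1 ->
    `|p.1 - q.1| < d -> `|p.2 - q.2| < d -> `|f p - f q| < e.
Proof.
move=> fc e e0; apply: contrapT => H.
have H' : forall n : nat, exists pq : pt R * pt R,
    [/\ `|pq.1.1| <= 1, `|pq.1.2| <= 1, `|pq.1.1 - pq.2.1| < n.+1%:R^-1,
        `|pq.1.2 - pq.2.2| < n.+1%:R^-1 & e <= `|f pq.1 - f pq.2|].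
  move=> n; apply: contrapT => Hn; apply: H; exists n.+1%:R^-1.
    by rewrite invr_gt0 ltr0Sn.
  move=> p q h1 h2 h3 h4; rewrite ltNge; apply/negP => h5; apply: Hn.
  by exists (p, q).
have [pq Hpq] := choice H'.
pose K : set (pt R) := `[(-1 : R), 1] `*` `[(-1 : R), 1].
have cK : compact K by apply: compact_setX; apply: segment_compact.
pose F := (fun n => (pq n).1) @ \oo.
have FK : F K.
  apply: (@filterE nat \oo _ [set n | K (pq n).1]) => n.
  have [h1 h2 _ _ _] := Hpq n.
  by split; rewrite /= in_itv /= -ler_norml.
have [x [Kx clx]] := cK F _ FK.
have [r r0 Hr] : exists2 r : R, 0 < r & ball x r `<=` [set t | `|f x - f t| < e / 2].
  apply/nbhs_ballP; have := fc x; move/cvgrPdist_lt; apply.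
  by rewrite divr_gt0.
have r20 : 0 < r / 2 by rewrite divr_gt0.
have [N HN] := natSinv_lt r20.
pose A := [set y | exists n, (N <= n)%N /\ y = (pq n).1].
have FA : F A.
  rewrite /F; apply: filterS (nbhs_infty_ge N) => n hn.
  by exists n.
have nB : nbhs x (ball x (r / 2)) by apply: nbhsx_ballx.
have [y [[n [hn ->]] By]] := clx A _ FA nB.
have [h1 h2 h3 h4 h5] := Hpq n.
have hNn := HN n hn.
case: By => /ballR b1 /ballR b2.
have Bp : ball x r (pq n).1.
  split; apply: ballR'; rewrite /=.
  - by apply: lt_trans b1 _; rewrite ltr_pdivrMr // ltr_pMr // ltr1n.
  - by apply: lt_trans b2 _; rewrite ltr_pdivrMr // ltr_pMr // ltr1n.
have Bq : ball x r (pq n).2.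
  split; apply: ballR'; rewrite /=.
  - apply: le_lt_trans (ler_distD (pq n).1.1 _ _) _.
    by rewrite [r in _ < r](splitr r) ltrD // (lt_trans h3 hNn).
  - apply: le_lt_trans (ler_distD (pq n).1.2 _ _) _.
    by rewrite [r in _ < r](splitr r) ltrD // (lt_trans h4 hNn).
have fp := Hr _ Bp; have fq := Hr _ Bq; rewrite /= in fp fq.
have : `|f (pq n).1 - f (pq n).2| < e.
  apply: le_lt_trans (ler_distD (f x) _ _) _.
  by rewrite distrC [e in _ < e](splitr e) ltrD.
by rewrite ltNge h5.
Qed.

Lemma bound_K (f : pt R -> E) : continuous f ->
  exists2 M : R, 0 <= M & forall p : pt R, `|p.1| <= 1 -> `|p.2| <= 1 -> `|f p| <= M.
Proof.
move=> fc.
pose K : set (pt R) := `[(-1 : R), 1] `*` `[(-1 : R), 1].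
have cK : compact K by apply: compact_setX; apply: segment_compact.
have := compact_bounded (continuous_compact (continuous_subspaceT fc) cK).
case=> M [_ HM].
exists (`|M| + 1); first by rewrite addr_ge0.
move=> p h1 h2; apply: (HM (`|M| + 1)).
  by apply: le_lt_trans (ler_norm M) _; rewrite ltrDl.
exists p => //; split; rewrite /= in_itv /= -ler_norml //.
Qed.
End Unif.

Section Avg.
Variables (R : realType) (E : normedModType R).

Definition avg (g : R -> E) (n : nat) : E :=
  (n.+1%:R)^-1 *: \sum_(k < n.+1) g (k%:R / n.+1%:R).

Lemma big_mul (G : nat -> E) (a b : nat) :
  \sum_(i < a * b) G i = \sum_(k < a) \sum_(j < b) G (k * b + j)%N.
Proof.
elim: a => [|a IH]; first by rewrite mul0n !big_ord0.
rewrite big_ord_recr /= -IH mulSn addnC big_split_ord /=.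
congr (_ + _); apply: eq_bigr => i _ //.
Qed.

Lemma frac_in (k n : nat) : (k <= n.+1)%N -> 0 <= (k%:R / n.+1%:R : R) <= 1.
Proof.
move=> kn; rewrite divr_ge0 //= ler_pdivrMr ?ltr0Sn // mul1r ler_nat //.
Qed.

Lemma avg_diff (g h : R -> E) n e : (forall t, 0 <= t <= 1 -> `|g t - h t| <= e) ->
  `|avg g n - avg h n| <= e.
Proof.
move=> H; rewrite /avg -scalerBr -sumrB normrZ ger0_norm; last by rewrite invr_ge0.
apply: le_trans (ler_wpM2l _ (ler_norm_sum _ _ _)) _; first by rewrite invr_ge0.
have S : \sum_(i < n.+1) `|g (i%:R / n.+1%:R) - h (i%:R / n.+1%:R)| <= \sum_(i < n.+1) e.
  by apply: ler_sum => i _; apply: H; apply: frac_in; exact: ltnW.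
apply: le_trans (ler_wpM2l _ S) _; first by rewrite invr_ge0.
rewrite sumr_const card_ord -[e *+ _]mulr_natl mulrA mulVf ?mul1r //.
Qed.

Lemma avg_norm (g : R -> E) n B : (forall t, 0 <= t <= 1 -> `|g t| <= B) ->
  `|avg g n| <= B.
Proof.
move=> H.
have z : avg (fun=> 0 : E) n = 0 by rewrite /avg big1 ?scaler0.
rewrite -[avg g n]subr0 -z.
by apply: avg_diff => t /H; rewrite subr0.
Qed.


Lemma avg_refine (g : R -> E) n m eta :
  (forall s t, 0 <= s <= 1 -> 0 <= t <= 1 -> `|s - t| <= n.+1%:R^-1 ->
     `|g s - g t| <= eta) ->
  `|avg g n - avg g (n.+1 * m.+1).-1| <= eta.
Proof.
move=> H.
have ab : ((n.+1 * m.+1).-1).+1 = (n.+1 * m.+1)%N by rewrite prednK // muln_gt0.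
rewrite /avg ab (big_mul (fun k => g (k%:R / (n.+1 * m.+1)%:R))).
set a := n.+1; set b := m.+1.
have a0 : (a%:R : R) != 0 by rewrite pnatr_eq0.
have b0 : (b%:R : R) != 0 by rewrite pnatr_eq0.
have eq1 : a%:R^-1 *: \sum_(k < a) g (k%:R / a%:R) =
    (a * b)%:R^-1 *: \sum_(k < a) \sum_(j < b) g (k%:R / a%:R).
  under [in RHS]eq_bigr do rewrite sumr_const card_ord.
  rewrite sumrMnl -[_ *+ b]scaler_nat scalerA; congr (_ *: _).
  by rewrite natrM invfM -mulrA mulVf ?mulr1.
rewrite eq1 -scalerBr -sumrB.
under eq_bigr do rewrite -sumrB.
rewrite normrZ ger0_norm; last by rewrite invr_ge0.
have S : `|\sum_(k < a) \sum_(j < b) (g (k%:R / a%:R) - g ((k * b + j)%N%:R / (a * b)%:R))|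
    <= \sum_(k < a) \sum_(j < b) eta.
  apply: le_trans (ler_norm_sum _ _ _) _.
  apply: ler_sum => k _; apply: le_trans (ler_norm_sum _ _ _) _.
  apply: ler_sum => j _; apply: H.
  - by apply: frac_in; exact: ltnW.
  - rewrite divr_ge0 //= ler_pdivrMr ?ltr0n ?muln_gt0 // mul1r ler_nat.
    have := ltn_ord k; have := ltn_ord j; rewrite -/a -/b; nia.
  - have -> : (k%:R / a%:R - (k * b + j)%N%:R / (a * b)%:R : R) =
        - (j%:R / (a%:R * b%:R)).
      by rewrite natrD !natrM; field; apply/andP.
    rewrite normrN ger0_norm ?divr_ge0 ?mulr_ge0 //.
    rewrite ler_pdivrMr ?mulr_gt0 ?ltr0n // mulrA mulVf // mul1r ler_nat.
    exact: ltnW.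
apply: le_trans (ler_wpM2l _ S) _; first by rewrite invr_ge0.
rewrite (eq_bigr (fun=> eta *+ b)); last by move=> k _; rewrite sumr_const card_ord.
rewrite sumr_const card_ord -mulrnA -[eta *+ _]mulr_natl mulnC mulrA mulVf ?mul1r //.
by rewrite pnatr_eq0 muln_eq0.
Qed.

End Avg.
Arguments avg {R E}.

Section Riemann.
Variables (R : realType) (E : completeNormedModType R).
Variables (F1 F2 : pt R -> E).
Hypotheses (c1 : continuous F1) (c2 : continuous F2).

Lemma riemann_avg (l : seg R) n :
  riemann_sum F1 F2 l n = avg (integrand F1 F2 l) n.
Proof. by []. Qed.

Lemma tv_le (t v : R) : 0 <= t <= 1 -> `|t * v| <= `|v|.
Proof.
case/andP=> t0 t1; rewrite normrM ger0_norm //.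
by rewrite ler_piMl.
Qed.

Lemma pt_in (l : seg R) t : Xset l -> 0 <= t <= 1 ->
  `|l.1.1 + t * l.2.1| <= 1 /\ `|l.1.2 + t * l.2.2| <= 1.
Proof.
move=> /Xbound [h1 h2 h3 h4] ht.
have a1 := tv_le l.2.1 ht; have a2 := tv_le l.2.2 ht.
split.
- apply: le_trans (ler_normD _ _) _.
  have : `|l.1.1| <= 2^-1 by rewrite ler_norml; case/andP: h1 => ? ?; apply/andP; split; lra.
  lra.
- apply: le_trans (ler_normD _ _) _.
  have : `|l.1.2| <= 2^-1 by rewrite ler_norml; case/andP: h2 => ? ?; apply/andP; split; lra.
  lra.
Qed.

Lemma integrand_diff (l : seg R) s t :
  integrand F1 F2 l s - integrand F1 F2 l t =
  l.2.1 *: (F1 (l.1.1 + s * l.2.1, l.1.2 + s * l.2.2) - F1 (l.1.1 + t * l.2.1, l.1.2 + t * l.2.2)) +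
  l.2.2 *: (F2 (l.1.1 + s * l.2.1, l.1.2 + s * l.2.2) - F2 (l.1.1 + t * l.2.1, l.1.2 + t * l.2.2)).
Proof. by rewrite /integrand /= opprD addrACA -!scalerBr. Qed.

Lemma modulus e : 0 < e -> exists N : nat, forall n, (N <= n)%N -> forall l, Xset l ->
  forall s t, 0 <= s <= 1 -> 0 <= t <= 1 -> `|s - t| <= n.+1%:R^-1 ->
  `|integrand F1 F2 l s - integrand F1 F2 l t| <= e.
Proof.
move=> e0.
have [d1 d10 U1] := unif_K c1 e0.
have [d2 d20 U2] := unif_K c2 e0.
have d0 : 0 < Num.min d1 d2 by rewrite lt_min d10 d20.
have [N HN] := natSinv_lt d0.
exists N => n nN l Xl s t hs ht hst.
have hN := HN n nN; move: hN; rewrite lt_min => /andP[hd1 hd2].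
have [_ _ v1 v2] := Xbound Xl.
have [p1 p2] := pt_in Xl hs.
have q1 : `|l.1.1 + s * l.2.1 - (l.1.1 + t * l.2.1)| < Num.min d1 d2.
  rewrite opprD addrACA subrr add0r -mulrBl normrM.
  have vv : `|l.2.1| <= 1 by lra.
  apply: le_lt_trans (ler_wpM2l (normr_ge0 _) vv) _.
  rewrite mulr1 lt_min; apply/andP; split; [exact: le_lt_trans hst hd1|exact: le_lt_trans hst hd2].
have q2 : `|l.1.2 + s * l.2.2 - (l.1.2 + t * l.2.2)| < Num.min d1 d2.
  rewrite opprD addrACA subrr add0r -mulrBl normrM.
  have vv : `|l.2.2| <= 1 by lra.
  apply: le_lt_trans (ler_wpM2l (normr_ge0 _) vv) _.
  rewrite mulr1 lt_min; apply/andP; split; [exact: le_lt_trans hst hd1|exact: le_lt_trans hst hd2].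
move: q1 q2; rewrite !lt_min => /andP[q11 q12] /andP[q21 q22].
have f1 := U1 (l.1.1 + s * l.2.1, l.1.2 + s * l.2.2) (l.1.1 + t * l.2.1, l.1.2 + t * l.2.2) p1 p2 q11 q21.
have f2 := U2 (l.1.1 + s * l.2.1, l.1.2 + s * l.2.2) (l.1.1 + t * l.2.1, l.1.2 + t * l.2.2) p1 p2 q12 q22.
rewrite integrand_diff; apply: le_trans (ler_normD _ _) _.
rewrite !normrZ.
have g1 : `|l.2.1| * `|F1 (l.1.1 + s * l.2.1, l.1.2 + s * l.2.2) - F1 (l.1.1 + t * l.2.1, l.1.2 + t * l.2.2)| <= 4^-1 * e.
  apply: ler_pM => //; exact: ltW.
have g2 : `|l.2.2| * `|F2 (l.1.1 + s * l.2.1, l.1.2 + s * l.2.2) - F2 (l.1.1 + t * l.2.1, l.1.2 + t * l.2.2)| <= 4^-1 * e.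
  apply: ler_pM => //; exact: ltW.
lra.
Qed.


Lemma riemann_cauchy e : 0 < e -> exists N : nat, forall l, Xset l ->
  forall n m, (N <= n)%N -> (N <= m)%N ->
  `|riemann_sum F1 F2 l n - riemann_sum F1 F2 l m| <= e.
Proof.
move=> e0.
have e20 : 0 < e / 2 by rewrite divr_gt0.
have [N HN] := modulus e20.
exists N => l Xl n m nN mN; rewrite !riemann_avg.
have h1 := avg_refine m (HN n nN l Xl).
have h2 := avg_refine n (HN m mN l Xl).
rewrite mulnC in h2.
apply: le_trans (ler_distD (avg (integrand F1 F2 l) (n.+1 * m.+1).-1) _ _) _.
rewrite [X in _ + X]distrC.
by rewrite [e in _ <= e](splitr e) lerD.
Qed.

Lemma riemann_cvg l : Xset l -> cvg (riemann_sum F1 F2 l @ \oo).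
Proof.
move=> Xl; apply: cauchy_cvg; apply/cauchyP => e e0.
have e20 : 0 < e / 2 by rewrite divr_gt0.
have [N HN] := riemann_cauchy e20.
exists (riemann_sum F1 F2 l N).
apply: filterS (nbhs_infty_ge N) => n hn.
rewrite -ball_normE /ball_ /=.
apply: le_lt_trans (HN l Xl N n (leqnn N) hn) _.
by rewrite ltr_pdivrMr // ltr_pMr // ltr1n.
Qed.

Lemma iota_approx e : 0 < e -> exists N : nat, forall l, Xset l ->
  forall n, (N <= n)%N -> `|Defs.iota F1 F2 l - riemann_sum F1 F2 l n| <= e.
Proof.
move=> e0; have [N HN] := riemann_cauchy e0.
exists N => l Xl n nN.
have cv := riemann_cvg Xl.
set u := riemann_sum F1 F2 l.
have cw : (fun k => `|u k - u n|) @ \oo --> `|lim (u @ \oo) - u n|.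
  by apply: cvg_norm; apply: cvgB => //; exact: cvg_cst.
rewrite /Defs.iota -/u -(cvg_lim (@Rhausdorff R) cw).
apply: limr_le; first by apply/cvg_ex; eexists; exact: cw.
apply: filterS (nbhs_infty_ge N) => k hk.
by rewrite distrC; apply: HN.
Qed.


Lemma integrand_bound (l : seg R) M1 M2 t : Xset l -> 0 <= t <= 1 ->
  (forall p : pt R, `|p.1| <= 1 -> `|p.2| <= 1 -> `|F1 p| <= M1) ->
  (forall p : pt R, `|p.1| <= 1 -> `|p.2| <= 1 -> `|F2 p| <= M2) ->
  `|integrand F1 F2 l t| <= seglen l * (M1 + M2).
Proof.
move=> Xl ht B1 B2.
have [q1 q2] := pt_in Xl ht.
have b1 := B1 (l.1.1 + t * l.2.1, l.1.2 + t * l.2.2) q1 q2; have b2 := B2 (l.1.1 + t * l.2.1, l.1.2 + t * l.2.2) q1 q2.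
rewrite /integrand /=; apply: le_trans (ler_normD _ _) _.
rewrite !normrZ mulrDr.
apply: lerD; apply: ler_pM => //.
- exact: enorm_ge1.
- exact: enorm_ge2.
Qed.

Lemma iota_bound : exists2 K : R, 0 <= K & forall l, Xset l ->
  `|Defs.iota F1 F2 l| <= K * seglen l.
Proof.
have [M1 M10 B1] := bound_K c1.
have [M2 M20 B2] := bound_K c2.
exists (M1 + M2); first by rewrite addr_ge0.
move=> l Xl; apply/ler_addgt0Pr => e e0.
have [N HN] := iota_approx e0.
have h := HN l Xl N (leqnn N).
have h2 : `|riemann_sum F1 F2 l N| <= seglen l * (M1 + M2).
  rewrite riemann_avg; apply: avg_norm => t ht.
  exact: integrand_bound.
rewrite mulrC.
have := ler_distD (riemann_sum F1 F2 l N) (Defs.iota F1 F2 l) 0.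
rewrite !subr0 distrC => h3.
rewrite distrC in h3.
lra.
Qed.

Lemma riemann_contX : Defs.periodic F1 -> Defs.periodic F2 ->
  forall e, 0 < e -> exists2 d, 0 < d & forall l m, Xset l -> Xset m -> dX l m < d ->
  forall n, `|riemann_sum F1 F2 l n - riemann_sum F1 F2 m n| <= e.
Proof.
move=> P1 P2 e e0.
have e40 : 0 < e / 4 by rewrite divr_gt0.
have [d1 d10 U1] := unif_K c1 e0.
have [d2 d20 U2] := unif_K c2 e0.
have [M1 M10 B1] := bound_K c1.
have [M2 M20 B2] := bound_K c2.
pose d := Num.min (8^-1) (Num.min (Num.min d1 d2 / 3) (e / (8 * (M1 + M2 + 1)))).
have MM : 0 < M1 + M2 + 1 by rewrite ltr_wpDl ?addr_ge0.
have d0 : 0 < d.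
  have m0 : 0 < Num.min d1 d2 by rewrite lt_min d10 d20.
  rewrite lt_min invr_gt0 ltr0n /= lt_min !divr_gt0 ?mulr_gt0 //.
have dd1 : 3 * d <= d1.
  have : d <= Num.min d1 d2 / 3 by rewrite /d !ge_min lexx orbT.
  rewrite ler_pdivlMr // => h; apply: le_trans (_ : Num.min d1 d2 <= d1).
    by rewrite mulrC.
  by rewrite ge_min lexx.
have dd2 : 3 * d <= d2.
  have : d <= Num.min d1 d2 / 3 by rewrite /d !ge_min lexx orbT.
  rewrite ler_pdivlMr // => h; apply: le_trans (_ : Num.min d1 d2 <= d2).
    by rewrite mulrC.
  by rewrite ge_min lexx orbT.
have d8 : d <= 8^-1 by rewrite /d ge_min lexx.
have dM : d * M1 + d * M2 <= e / 8.
  have : d <= e / (8 * (M1 + M2 + 1)) by rewrite /d !ge_min lexx !orbT.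
  rewrite ler_pdivlMr ?mulr_gt0 // => h.
  have : d * (M1 + M2) <= d * (M1 + M2 + 1) by apply: ler_wpM2l; [exact: ltW | rewrite lerDl].
  rewrite -mulrDr; nra.
exists d => // l m Xl Xm hd n.
have [k1 [k2 [hk1 hk2 hv1 hv2]]] := dX_close Xl Xm d0 d8 hd.
have [_ _ v1 v2] := Xbound Xl.
rewrite !riemann_avg; apply: avg_diff => t ht.
have [t0 t1] : 0 <= t /\ t <= 1 by case/andP: ht.
set p := (l.1.1 + t * l.2.1, l.1.2 + t * l.2.2).
set q' := (m.1.1 + t * m.2.1, m.1.2 + t * m.2.2).
set q := (q'.1 + k1%:~R, q'.2 + k2%:~R).
have [pi1 pi2] := pt_in Xl ht.
have [qi1 qi2] := pt_in Xm ht.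
have F1q : F1 q = F1 q' by rewrite /q per_int.
have F2q : F2 q = F2 q' by rewrite /q per_int.
have pq1 : `|p.1 - q.1| < d1.
  rewrite /p /q /q' /=.
  have -> : l.1.1 + t * l.2.1 - (m.1.1 + t * m.2.1 + k1%:~R) =
      (l.1.1 - m.1.1 - k1%:~R) + t * (l.2.1 - m.2.1) by ring.
  apply: le_lt_trans (ler_normD _ _) _.
  have := tv_le (l.2.1 - m.2.1) ht; lra.
have pq2 : `|p.2 - q.2| < d2.
  rewrite /p /q /q' /=.
  have -> : l.1.2 + t * l.2.2 - (m.1.2 + t * m.2.2 + k2%:~R) =
      (l.1.2 - m.1.2 - k2%:~R) + t * (l.2.2 - m.2.2) by ring.
  apply: le_lt_trans (ler_normD _ _) _.
  have := tv_le (l.2.2 - m.2.2) ht; lra.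
have pq1' : `|p.2 - q.2| < d1.
  rewrite /p /q /q' /=.
  have -> : l.1.2 + t * l.2.2 - (m.1.2 + t * m.2.2 + k2%:~R) =
      (l.1.2 - m.1.2 - k2%:~R) + t * (l.2.2 - m.2.2) by ring.
  apply: le_lt_trans (ler_normD _ _) _.
  have := tv_le (l.2.2 - m.2.2) ht; lra.
have pq2' : `|p.1 - q.1| < d2.
  rewrite /p /q /q' /=.
  have -> : l.1.1 + t * l.2.1 - (m.1.1 + t * m.2.1 + k1%:~R) =
      (l.1.1 - m.1.1 - k1%:~R) + t * (l.2.1 - m.2.1) by ring.
  apply: le_lt_trans (ler_normD _ _) _.
  have := tv_le (l.2.1 - m.2.1) ht; lra.
have f1 := U1 p q pi1 pi2 pq1 pq1'.
have f2 := U2 p q pi1 pi2 pq2' pq2.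
rewrite F1q in f1; rewrite F2q in f2.
have b1 := B1 q' qi1 qi2; have b2 := B2 q' qi1 qi2.
rewrite /integrand -/p -/q' opprD addrACA.
apply: le_trans (ler_normD _ _) _.
have T1 : `|l.2.1 *: F1 p - m.2.1 *: F1 q'| <=
    `|l.2.1| * `|F1 p - F1 q'| + `|l.2.1 - m.2.1| * `|F1 q'|.
  apply: le_trans (ler_distD (l.2.1 *: F1 q') _ _) _.
  by rewrite -scalerBr -scalerBl !normrZ.
have T2 : `|l.2.2 *: F2 p - m.2.2 *: F2 q'| <=
    `|l.2.2| * `|F2 p - F2 q'| + `|l.2.2 - m.2.2| * `|F2 q'|.
  apply: le_trans (ler_distD (l.2.2 *: F2 q') _ _) _.
  by rewrite -scalerBr -scalerBl !normrZ.
have S1 : `|l.2.1| * `|F1 p - F1 q'| <= 4^-1 * e by apply: ler_pM => //; exact: ltW.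
have S2 : `|l.2.2| * `|F2 p - F2 q'| <= 4^-1 * e by apply: ler_pM => //; exact: ltW.
have S3 : `|l.2.1 - m.2.1| * `|F1 q'| <= (2 * d) * M1 by apply: ler_pM => //; exact: ltW.
have S4 : `|l.2.2 - m.2.2| * `|F2 q'| <= (2 * d) * M2 by apply: ler_pM => //; exact: ltW.
lra.
Qed.

End Riemann.

Section Main.
Variables (R : realType) (E : completeNormedModType R).

Lemma tmod_fund (t : R) : - 2^-1 <= t < 2^-1 -> tmod t = t.
Proof.
move=> /andP[h1 h2]; rewrite /tmod.
have -> : Num.floor (t + 2^-1) = 0.
  apply: floor_def; rewrite add0r /=; apply/andP; split.
    have -> : (0%:~R : R) = 0 by []. lra.
  have -> : (1%:~R : R) = 1 by []. lra.
by rewrite subr0.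
Qed.

Lemma A_zero (A : seg R -> E) : in_Omega A -> forall l, Xset l -> seglen l = 0 -> A l = 0.
Proof.
move=> [_ HA] [x v] Xl /enorm0 /= v0; subst v.
have J : joinable (x, (0, 0)) (x, (0, 0)).
  have X' := Xl; case: X' => [[f1 f2] _].
  split => //; split => //; split.
    rewrite /red /seg_f /= !addr0 !tmod_fund //.
    by case: x {Xl f1 f2}.
  split.
    by rewrite /samedir /= mulr0 addr0; split.
  by rewrite /= !addr0 /enorm /= expr0n /= addr0 sqrtr0 invr_ge0.
have C : concat (x, (0, 0)) (x, (0, 0)) = (x, (0, 0)).
  by rewrite /concat /= !addr0.
have := HA _ _ J; rewrite C => h.
have := congr1 (fun y => y - A (x, (0, 0))) h; rewrite addrK subrr => <-. done.
Qed.


Lemma powa_le1 (alpha s : R) : 0 <= alpha -> 0 <= s <= 1 -> s `^ alpha <= 1.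
Proof.
move=> a0 /andP[s0 s1].
have := ge0_ler_powR a0 (x := s) (y := 1); rewrite powR1 /=; apply => //.
by rewrite nnegrE.
Qed.

Lemma approx (A : seg R -> E) alpha : 0 < alpha -> in_Omega1_gr alpha A ->
  forall eps, 0 < eps -> exists F1 F2 : pt R -> E,
  [/\ continuous F1, continuous F2, Defs.periodic F1, Defs.periodic F2 &
  exists C, [/\ C < eps, gr_le alpha (fun l => A l - Defs.iota F1 F2 l) C &
    forall l, Xset l -> `|A l - Defs.iota F1 F2 l| <= Num.max C 0]].
Proof.
move=> a0 [[HOm _] H] eps e0.
have [F1 [F2 [[P1 [P2 [S1 S2]]] [C Ce HC]]]] := H eps e0.
have c1 : continuous F1 := S1 0%N.
have c2 : continuous F2 := S2 0%N.
have [K K0 HK] := iota_bound c1 c2.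
exists F1, F2; split => //; exists C; split => //.
move=> l Xl.
have := enorm_ge0 l.2; rewrite le_eqVlt => /orP[/eqP s0|s0].
- have s0' : seglen l = 0 by rewrite /seglen s0.
  rewrite (A_zero HOm Xl s0') sub0r normrN.
  have := HK l Xl; rewrite s0' mulr0 => h.
  apply: le_trans h _; by rewrite le_max lexx orbT.
- have := HC l Xl s0 => /= h; apply: le_trans h _.
  have p0 : 0 <= seglen l `^ alpha := powR_ge0 _ _.
  have p1 : seglen l `^ alpha <= 1.
    apply: powa_le1; first exact: ltW.
    have [_ h4] := Xl; rewrite /seglen (ltW s0) /=.
    by apply: le_trans h4 _; rewrite invf_le1 // ler1n.
  apply: le_trans (ler_wpM2r p0 (_ : C <= Num.max C 0)) _.
    by rewrite le_max lexx.
  rewrite ler_piMr //.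
  by rewrite le_max lexx orbT.
Qed.

End Main.

Unset Implicit Arguments.
Set Strict Implicit.

Theorem proposition3p25 (R : realType) (E : completeNormedModType R)
    (alpha : R) (A : seg R -> E) :
  0 < alpha < 1 -> in_Omega1_gr alpha A ->
  continuous_X A /\ sup_small alpha A eps @[eps --> 0^'+] --> 0.
Proof.
move=> /andP[a0 a1] HA.
split.
- move=> l Xl e e0.
  have e8 : 0 < e / 8 by rewrite divr_gt0.
  have e4 : 0 < e / 4 by rewrite divr_gt0.
  have [F1 [F2 [c1 c2 P1 P2 [C [Ce _ HC]]]]] := approx a0 HA e8.
  have [N HN] := iota_approx c1 c2 e4.
  have [d d0 Hd] := riemann_contX c1 c2 P1 P2 e4.
  exists d => // m Xm hd.
  set il := Defs.iota F1 F2 l; set im := Defs.iota F1 F2 m.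
  set Rl := riemann_sum F1 F2 l N; set Rm := riemann_sum F1 F2 m N.
  have -> : A l - A m = (A l - il) + (il - Rl) + (Rl - Rm) + (Rm - im) + (im - A m).
    by rewrite !addrA !subrK.
  have h1 := HC l Xl; have h5 := HC m Xm; rewrite distrC in h5.
  have h2 := HN l Xl N (leqnn N); have h4 := HN m Xm N (leqnn N).
  rewrite distrC in h4.
  have h3 := Hd l m Xl Xm hd N.
  have hmax : Num.max C 0 < e / 8 by rewrite gt_max Ce e8.
  set a := A l - il; set b := il - Rl; set c := Rl - Rm; set dd := Rm - im; set f := im - A m.
  have T : `|a + b + c + dd + f| <= `|a| + `|b| + `|c| + `|dd| + `|f|.
    apply: le_trans (ler_normD _ _) _; rewrite lerD2r.
    apply: le_trans (ler_normD _ _) _; rewrite lerD2r.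
    apply: le_trans (ler_normD _ _) _; rewrite lerD2r.
    exact: ler_normD.
  lra.
- apply/cvgrPdist_le => e e0.
  have e2 : 0 < e / 2 by rewrite divr_gt0.
  have [F1 [F2 [c1 c2 _ _ [C [Ce HC _]]]]] := approx a0 HA e2.
  have [K K0 HK] := iota_bound c1 c2.
  have b0 : 0 < 1 - alpha by rewrite subr_gt0.
  have K1 : 0 < K + 1 by rewrite ltr_wpDl.
  have eK : 0 < e / (2 * (K + 1)) by rewrite divr_gt0 ?mulr_gt0.
  have Hp := powR_cvg0 b0; move/cvgrPdist_lt : Hp => /(_ _ eK) Hp.
  near=> eps.
  have eps0 : 0 < eps by near: eps; exact: nbhs_right_gt.
  have hp : `|0 - eps `^ (1 - alpha)| < e / (2 * (K + 1)) by near: eps; exact: Hp.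
  rewrite sub0r normrN ger0_norm ?powR_ge0 in hp.
  rewrite /sup_small; set S := (X in sup X).
  have ub : forall r, S r -> 0 <= r /\ r <= e.
    move=> r [l [Xl s0 seps ->]].
    split; first by rewrite mulr_ge0 ?powR_ge0.
    set s := seglen l.
    have hA : `|A l| <= C * s `^ alpha + K * s.
      have := HC l Xl s0; have := HK l Xl => /= q1 q2.
      rewrite -(subrK (Defs.iota F1 F2 l) (A l)).
      by apply: le_trans (ler_normD _ _) _; exact: lerD q2 q1.
    have sn0 : s != 0 by rewrite gt_eqF.
    have eq1 : s `^ (- alpha) * (C * s `^ alpha + K * s) = C + K * s `^ (1 - alpha).
      rewrite mulrDr mulrCA -(@powRD R s (- alpha) alpha); last by rewrite sn0 implybT.
      rewrite addNr powRr0 mulr1; congr (_ + _).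
      rewrite mulrCA; have -> : s `^ (- alpha) * s = s `^ (- alpha) * s `^ 1 by rewrite powRr1 // ltW.
      rewrite -(@powRD R s (- alpha) 1); last by rewrite sn0 implybT.
      by rewrite addrC.
    have mono : s `^ (1 - alpha) <= eps `^ (1 - alpha).
      apply: ge0_ler_powR; rewrite ?nnegrE ?(ltW b0) ?(ltW s0) ?(ltW eps0) ?(ltW seps) //.
    have step1 : s `^ (- alpha) * `|A l| <= C + K * s `^ (1 - alpha).
      by rewrite -eq1; apply: ler_wpM2l => //; exact: powR_ge0.
    set y := e / (2 * (K + 1)).
    have hy : y * (2 * (K + 1)) = e by rewrite /y divfK // mulf_neq0 // gt_eqF.
    have hK : K * s `^ (1 - alpha) <= K * y.
      by apply: ler_wpM2l => //; apply: le_trans mono (ltW hp).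
    have y0 : 0 < y := eK.
    nra.
  have [Sne|Se] := pselect (S !=set0).
  + have hs : has_sup S by split => //; exists e => r /ub [].
    have hsup : sup S <= e by apply: ge_sup => // r /ub [].
    case: Sne => r0 Sr0.
    have := sup_upper_bound hs Sr0; have := (ub r0 Sr0).1 => q1 q2.
    by rewrite sub0r normrN ger0_norm; lra.
  + have -> : S = set0.
      by apply/seteqP; split => r Sr //; exfalso; apply: Se; exists r.
    by rewrite sup0 subr0 normr0 ltW.
Unshelve. all: by end_near.
Qed.
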